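(* Let $n$ be a positive integer and $P\subseteq S_n$ a nonempty set of permutations. If $|P|\le n/2$ then $\mathrm{cr}(P)=n$. Moreover, there exists $P\subseteq S_n$ with $|P|=\lfloor n/2\rfloor+1$ and $\mathrm{cr}(P)<n$.
   Context: $S_n$ is the symmetric group on $\{1,\dots,n\}$, viewed as a metric space with the Hamming distance: the distance between $g,h\in S_n$ is the number of points $i$ with $g(i)\ne h(i)$. The covering radius $\mathrm{cr}(P)$ of a nonempty set $P\subseteq S_n$ is the smallest integer $r$ such that every permutation in $S_n$ is at distance at most $r$ from some element of $P$. *)

(* Defs.v *)
From mathcomp Require Import all_boot all_fingroup.
Set Implicit Arguments. Unset Strict Implicit. Unset Printing Implicit Defensive.

Definition hdist (n : nat) (g h : 'S_n) : nat := #|[pred i : 'I_n | g i != h i]|.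

Definition covers (n : nat) (P : {set 'S_n}) (r : nat) : Prop :=
  forall g : 'S_n, exists2 h, h \in P & hdist g h <= r.

Definition is_cr (n : nat) (P : {set 'S_n}) (r : nat) : Prop :=
  covers P r /\ forall r', covers P r' -> r <= r'.

(* Main.v *)
Require Import Defs.
From mathcomp Require Import all_boot all_fingroup.
Set Implicit Arguments. Unset Strict Implicit.

Section P1.
Variables (n : nat) (P : {set 'S_n}).
Hypothesis hP : (#|P|).*2 <= n.

Definition badset (g : 'S_n) : {set 'I_n} := [set i | [exists h in P, g i == h i]].

Lemma swap_ex g i : i \in badset g -> exists g', #|badset g'| < #|badset g|.
Proof.
move=> Hi.
set A := [set j | [exists h in P, g j == h i]].
set B := [set j | [exists h in P, h j == g i]].
have HA : #|A| <= #|P|.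
  apply: leq_trans (leq_imset_card (fun h : 'S_n => (g^-1)%g (h i)) P).
  apply: subset_leq_card; apply/subsetP => j; rewrite inE => /existsP [h /andP [hin /eqP e]].
  by apply/imsetP; exists h => //; rewrite -e permK.
have HB : #|B| <= #|P|.
  apply: leq_trans (leq_imset_card (fun h : 'S_n => (h^-1)%g (g i)) P).
  apply: subset_leq_card; apply/subsetP => j; rewrite inE => /existsP [h /andP [hin /eqP e]].
  by apply/imsetP; exists h => //; rewrite -e permK.
have iAB : i \in A :&: B.
  move: Hi; rewrite !inE => /existsP [h /andP [hin e]].
  by apply/andP; split; apply/existsP; exists h; rewrite hin // eq_sym.
have Hc : #|A :|: B| < n.
  have h1 : 0 < #|A :&: B| by apply/card_gt0P; exists i.
  have := cardsUI A B.
  have : #|A| + #|B| <= n by apply: leq_trans hP; rewrite -addnn leq_add.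
  move=> h2 h3; rewrite -h3 in h2.
  by apply: leq_trans h2; rewrite -addn1 leq_add2l.
have : ~~ ([set: 'I_n] \subset A :|: B).
  apply/negP => /subset_leq_card; rewrite cardsT card_ord => h.
  by move: (leq_ltn_trans h Hc); rewrite ltnn.
case/subsetPn => j _; rewrite in_setU negb_or => /andP [jA jB].
have ij : i != j by apply/eqP => e; move: jA; rewrite -e; case/setIP: iAB => ->.
exists (tperm i j * g)%g.
have Hs : badset (tperm i j * g)%g \subset badset g :\ i.
  apply/subsetP => x; rewrite !inE permM => /existsP [h /andP [hin /eqP e]].
  have [xi|xi] := eqVneq x i.
    move: e; rewrite xi tpermL => e; move: jA; rewrite inE; case/negP; apply/existsP.
    by exists h; rewrite hin e eqxx.
  have [xj|xj] := eqVneq x j.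
    move: e; rewrite xj tpermR => e; move: jB; rewrite inE; case/negP; apply/existsP.
    by exists h; rewrite hin e eqxx.
  apply/existsP; exists h; rewrite hin -e tpermD //.
  - by rewrite eqxx.
  - by rewrite eq_sym.
  - by rewrite eq_sym.
apply: leq_ltn_trans (subset_leq_card Hs) _.
by rewrite (cardsD1 i (badset g)) Hi.
Qed.

Lemma bad0 : exists g : 'S_n, forall h, h \in P -> forall i, g i != h i.
Proof.
suff : forall k (g : 'S_n), #|badset g| <= k -> exists g, #|badset g| = 0.
  case/(_ _ 1%g (leqnn _)) => g /eqP; rewrite cards_eq0 => /eqP H.
  exists g => h hP0 i; apply/negP => e.
  have : i \in badset g by rewrite inE; apply/existsP; exists h; rewrite hP0.
  by rewrite H inE.
elim=> [|k IH] g Hg.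
  by exists g; apply/eqP; rewrite -leqn0.
case: (boolP (#|badset g| == 0)) => [/eqP|]; first by exists g.
rewrite cards_eq0 => /set0Pn [i Hi].
case: (swap_ex Hi) => g' Hg'; apply: (IH g').
by rewrite -ltnS; apply: leq_trans Hg.
Qed.

End P1.

Lemma part1 (n : nat) (P : {set 'S_n}) : P != set0 -> (#|P|).*2 <= n -> is_cr P n.
Proof.
move=> /set0Pn [h0 h0P] hP; split.
  move=> g; exists h0 => //; rewrite /hdist.
  by apply: leq_trans (max_card _) _; rewrite card_ord.
move=> r Hr; case: (bad0 hP) => g Hg.
case: (Hr g) => h hin; rewrite /hdist.
suff -> : #|[pred i | g i != h i]| = n by [].
by rewrite -[RHS]card_ord; apply: eq_card => i; rewrite inE Hg.
Qed.

Section P2.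
Variables (n' m : nat).
Hypothesis Hm : m.+1 <= n'.+1.

Definition shiftf (t : nat) (i : 'I_n'.+1) : 'I_n'.+1 :=
  if i < m.+1 then inord ((i + t) %% m.+1) else i.

Lemma shiftf_val t (i : 'I_n'.+1) : i < m.+1 -> val (shiftf t i) = (i + t) %% m.+1.
Proof.
move=> Hi; rewrite /shiftf; case: ifP => [_|e]; last by move: Hi; rewrite e.
rewrite /= inordK //.
by apply: leq_trans Hm; rewrite ltn_mod.
Qed.

Lemma shiftf_inj t : injective (shiftf t).
Proof.
move=> i j.
case Hi: (i < m.+1); case Hj: (j < m.+1).
- move=> /(congr1 val); rewrite !shiftf_val // => /eqP.
  rewrite eqn_modDr !modn_small // => /eqP e; exact: val_inj.
- move=> /(congr1 val); rewrite (shiftf_val t Hi) /shiftf Hj => e.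
  by move: Hj; rewrite -e ltn_mod.
- move=> /(congr1 val); rewrite (shiftf_val t Hj) /shiftf Hi => e.
  by move: Hi; rewrite e ltn_mod.
- by rewrite /shiftf Hi Hj.
Qed.

Definition hsh (t : 'I_m.+1) : 'S_n'.+1 := perm (@shiftf_inj t).

Lemma hsh_inj : injective hsh.
Proof.
move=> t u /(congr1 (fun p : 'S_n'.+1 => val (p ord0))).
rewrite !permE !shiftf_val // !add0n !modn_small // => e; exact: val_inj.
Qed.

Definition Psh : {set 'S_n'.+1} := [set hsh t | t : 'I_m.+1].

Lemma Psh_card : #|Psh| = m.+1.
Proof. by rewrite card_imset ?card_ord //; exact: hsh_inj. Qed.

Hypothesis Hn : n'.+1 <= m.+1 + m.

Lemma Psh_cover : covers Psh n'.
Proof.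
move=> g.
pose S := [set widen_ord Hm x | x : 'I_m.+1].
have HS : #|S| = m.+1 by rewrite card_imset ?card_ord //; by move=> x y /(congr1 val) /= e; apply: val_inj.
have memS i : (i \in S) = (i < m.+1).
  apply/imsetP/idP => [[x _ ->] | Hi] /=; first exact: ltn_ord.
  by exists (Ordinal Hi) => //; apply: val_inj.
have : [exists x in S, g x \in S].
  case: (boolP [exists x in S, g x \in S]) => // /exists_inPn H.
  have Hsub : [set g x | x in S] \subset ~: S.
    by apply/subsetP => y /imsetP [x xS ->]; rewrite inE H.
  move: (subset_leq_card Hsub); rewrite card_imset; last exact: perm_inj.
  have := cardsC S; rewrite card_ord HS => e.
  have : m.+1 + #|~: S| <= m.+1 + m by rewrite e.
  rewrite leq_add2l => h1 h2.
  by move: (leq_trans h2 h1); rewrite ltnn.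
case/exists_inP => i Si gSi.
rewrite memS in Si; rewrite memS in gSi.
pose t : 'I_m.+1 := inord ((g i + m.+1 - i) %% m.+1).
exists (hsh t); first by apply/imsetP; exists t.
rewrite /hdist.
have Hsub : [pred x | g x != hsh t x] \subset predC1 i.
  apply/subsetP => x; rewrite !inE; apply: contra => /eqP ->.
  apply/eqP/val_inj; rewrite permE shiftf_val // inordK ?ltn_mod //.
  rewrite modnDmr addnBA; last by apply: leq_trans (ltnW Si) (leq_addl _ _).
  by rewrite addKn modnDr modn_small.
apply: leq_trans (subset_leq_card Hsub) _.
by rewrite cardC1 card_ord.
Qed.

End P2.

Definition coversb n (P : {set 'S_n}) r := [forall g, [exists h in P, hdist g h <= r]].

Lemma coversP n (P : {set 'S_n}) r : reflect (covers P r) (coversb P r).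
Proof.
apply: (iffP forallP) => H g.
  by case/exists_inP: (H g) => h; exists h.
by case: (H g) => h hP hd; apply/exists_inP; exists h.
Qed.

Lemma part2 n : 0 < n -> exists P : {set 'S_n}, #|P| = n./2 + 1 /\ exists2 r, is_cr P r & r < n.
Proof.
case: n => // n' _.
have Hm : (n'.+1)./2.+1 <= n'.+1.
  by rewrite ltn_half_double -addnn addnS ltnS addSn ltnS leq_addr.
have Hn : n'.+1 <= (n'.+1)./2.+1 + (n'.+1)./2.
  by move: (ltnSn (n'.+1)./2); rewrite ltn_half_double doubleS ltnS -addnn addSn.
exists (Psh Hm); split; first by rewrite Psh_card addn1.
have ex : exists r, coversb (Psh Hm) r by exists n'; apply/coversP; exact: Psh_cover.
case: (ex_minnP ex) => r /coversP Hr Hmin.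
exists r.
  split => // r' /coversP; exact: Hmin.
rewrite ltnS; apply: Hmin; apply/coversP; exact: Psh_cover.
Qed.

Theorem theorem6p1 (n : nat) (hn : 0 < n) :
  (forall P : {set 'S_n}, P != set0 -> (#|P|).*2 <= n -> is_cr P n) /\
  (exists P : {set 'S_n}, #|P| = n./2 + 1 /\ exists2 r, is_cr P r & r < n).
Proof.
split; first by move=> P; exact: part1.
exact: part2.
Qed.
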